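(* Let $H$ be a Hilbert space with norm $\|\cdot\|$ and let $\tau>0$. There is a constant $c_{12}\ge 1$, independent of $\tau$, $N$ and the sequence, such that for every sequence $(u^n)_{n\ge 0}$ in $H$ and every $N\ge 2$ the seminorms \[ |(u^n)|_{\tau,1} = \Big(\tau \sum_{n=2}^N \|\dot u^n\|^2 + \tau\|d_t u^1\|^2\Big)^{1/2},\qquad |(u^n)|_{\tau,2} = \Big(\tau\sum_{n=1}^N \|d_t u^n\|^2\Big)^{1/2} \] satisfy $c_{12}^{-1}|(u^n)|_{\tau,1} \le |(u^n)|_{\tau,2} \le c_{12}|(u^n)|_{\tau,1}$.
   Context: For a sequence $(u^n)$ and step size $\tau>0$: $d_t u^n = (u^n-u^{n-1})/\tau$ for $n\ge 1$, and $\dot u^n = \frac{1}{2\tau}(3u^n - 4u^{n-1} + u^{n-2})$ for $n\ge 2$ (the BDF2 difference quotient). *)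

(* Defs.v *)
From HB Require Import structures.
From mathcomp Require Import all_boot all_order all_algebra.
From mathcomp Require Import all_classical all_reals all_analysis.
Set Implicit Arguments. Unset Strict Implicit. Unset Printing Implicit Defensive.
Import Order.TTheory GRing.Theory Num.Theory.
Import numFieldNormedType.Exports.
Local Open Scope ring_scope.

Definition hilbert_inner (R : realType) (V : completeNormedModType R)
  (ip : V -> V -> R) : Prop :=
  [/\ (forall x y : V, ip x y = ip y x),
      (forall (a : R) (x y z : V), ip (a *: x + y) z = a * ip x z + ip y z),
      (forall x : V, 0 <= ip x x) &
      (forall x : V, `|x| = Num.sqrt (ip x x))].

Definition dt (R : realType) (V : normedModType R) (tau : R) (u : nat -> V)
  (n : nat) : V := tau^-1 *: (u n - u n.-1).

Definition bdf2 (R : realType) (V : normedModType R) (tau : R) (u : nat -> V)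
  (n : nat) : V := (2 * tau)^-1 *: (3%:R *: u n - 4%:R *: u n.-1 + u n.-2).

Definition seminorm1 (R : realType) (V : normedModType R) (tau : R)
  (N : nat) (u : nat -> V) : R :=
  Num.sqrt (tau * (\sum_(2 <= n < N.+1) `|bdf2 tau u n| ^+ 2)
            + tau * `|dt tau u 1| ^+ 2).

Definition seminorm2 (R : realType) (V : normedModType R) (tau : R)
  (N : nat) (u : nat -> V) : R :=
  Num.sqrt (tau * \sum_(1 <= n < N.+1) `|dt tau u n| ^+ 2).

(* Main.v *)
From HB Require Import structures.
From mathcomp Require Import all_boot all_order all_algebra.
From mathcomp Require Import all_classical all_reals all_analysis.
From mathcomp Require Import lra.
Require Import Defs.
Import Order.TTheory GRing.Theory Num.Theory.
Import numFieldNormedType.Exports.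
Local Open Scope ring_scope.
Lemma vid (R : realType) (V : normedModType R) (p q r : V) :
  3%:R *: p - 4%:R *: q + r = 3%:R *: (p - q) - (q - r).
Proof.
rewrite (_ : 4%:R *: q = 3%:R *: q + q); last first.
  by rewrite (natrD _ 3 1) scalerDl scale1r.
rewrite scalerBr opprD opprB !addrA -[RHS]addrA (addrC r) addrA //.
Qed.

Lemma aux1 (R : realType) (y a b : R) : 0 <= y -> 0 <= a -> 0 <= b ->
  y <= (3%:R * a + b) / 2 -> y ^+ 2 <= (5%:R/2) * (a ^+ 2 + b ^+ 2).
Proof.
move=> y0 a0 b0 h.
have h1 : y ^+ 2 <= ((3%:R * a + b) / 2) ^+ 2.
  by rewrite ler_pXn2r // ?nnegrE //; lra.
have := sqr_ge0 (a - 3%:R * b); nra.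
Qed.

Lemma aux2 (R : realType) (x y b : R) : 0 <= y -> 0 <= x -> 0 <= b ->
  x <= (2%:R * y + b) / 3%:R -> x ^+ 2 <= y ^+ 2 + b ^+ 2 / 3%:R.
Proof.
move=> y0 a0 b0 h.
have h1 : x ^+ 2 <= ((2%:R * y + b) / 3%:R) ^+ 2.
  by rewrite ler_pXn2r // ?nnegrE //; lra.
have := sqr_ge0 (y - b); nra.
Qed.

Lemma upper_sum (R : realType) (x y : nat -> R) :
  (forall n, 0 <= x n) -> (forall n, 0 <= y n) ->
  (forall n, (2 <= n)%N -> y n <= (3%:R * x n + x n.-1) / 2) ->
  forall m, \sum_(2 <= n < m.+2) y n ^+ 2 <= 5%:R * \sum_(1 <= n < m.+2) x n ^+ 2 - (5%:R/2) * x m.+1 ^+ 2.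
Proof.
move=> x0 y0 hy; elim=> [|m IH].
  rewrite big_geq // big_nat1; have := sqr_ge0 (x 1%N); lra.
rewrite big_nat_recr //= [X in _ <= 5%:R * X - _]big_nat_recr //=.
have h := hy m.+2 isT; have := x0 m.+2; have := x0 m.+1; have := y0 m.+2.
simpl in h. move=> *; have := @aux1 R _ _ _ (y0 _) (x0 m.+2) (x0 m.+1) h; lra.
Qed.

Lemma lower_sum (R : realType) (x y : nat -> R) :
  (forall n, 0 <= x n) -> (forall n, 0 <= y n) ->
  (forall n, (2 <= n)%N -> x n <= (2%:R * y n + x n.-1) / 3%:R) ->
  forall m, \sum_(1 <= n < m.+2) x n ^+ 2 <= (3%:R/2) * (\sum_(2 <= n < m.+2) y n ^+ 2 + x 1%N ^+ 2) - (1/2) * x m.+1 ^+ 2.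
Proof.
move=> x0 y0 hy; elim=> [|m IH].
  rewrite big_nat1 big_geq //; have := sqr_ge0 (x 1%N); lra.
rewrite big_nat_recr //= [X in _ <= _ * (X + _) - _]big_nat_recr //=.
have h := hy m.+2 isT; have := x0 m.+2; have := x0 m.+1; have := y0 m.+2.
simpl in h. move=> *; have := @aux2 R _ _ _ (y0 _) (x0 m.+2) (x0 m.+1) h; lra.
Qed.

Lemma sqrt9 (R : realType) (s : R) : 0 <= s -> Num.sqrt (9%:R * s) = 3%:R * Num.sqrt s.
Proof.
move=> s0; rewrite sqrtrM ?ler0n // (_ : 9%:R = 3%:R ^+ 2 :> R).
  by rewrite sqrtr_sqr ger0_norm ?ler0n.
by rewrite -natrX.
Qed.

Theorem lemma2p1 (R : realType) (H : completeNormedModType R)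
  (ip : H -> H -> R) (Hip : hilbert_inner ip) :
  exists c12 : R, 1 <= c12 /\
    forall (tau : R), 0 < tau ->
    forall (N : nat), (2 <= N)%N ->
    forall (u : nat -> H),
      c12^-1 * seminorm1 tau N u <= seminorm2 tau N u /\
      seminorm2 tau N u <= c12 * seminorm1 tau N u.
Proof.
exists 3%:R; split; first by rewrite ler1n.
move=> tau tau0 N N2 u.
have e1 k : bdf2 tau u k.+2 = 2^-1 *: (3%:R *: dt tau u k.+2 - dt tau u k.+1).
  rewrite /bdf2 /dt /= vid invfM -scalerA; congr (_ *: _).
  by rewrite scalerBr !scalerA mulrC.
have e2 k : 2%:R *: bdf2 tau u k.+2 + dt tau u k.+1 = 3%:R *: dt tau u k.+2.
  by rewrite e1 scalerA mulfV ?pnatr_eq0 // scale1r subrK.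
pose x n := `|dt tau u n|.
pose y n := `|bdf2 tau u n|.
have x0 n : 0 <= x n by rewrite normr_ge0.
have y0 n : 0 <= y n by rewrite normr_ge0.
have hy n : (2 <= n)%N -> y n <= (3%:R * x n + x n.-1) / 2.
  case: n => [|[|k]] // _ /=; rewrite /y /x e1 normrZ ger0_norm ?invr_ge0 ?ler0n //.
  rewrite mulrC ler_wpM2r ?invr_ge0 ?ler0n //.
  by rewrite (le_trans (ler_normB _ _)) // normrZ ger0_norm ?ler0n.
have hx n : (2 <= n)%N -> x n <= (2%:R * y n + x n.-1) / 3%:R.
  case: n => [|[|k]] // _ /=; rewrite /x.
  have -> : dt tau u k.+2 = 3%:R^-1 *: (3%:R *: dt tau u k.+2).
    by rewrite scalerA mulVf ?pnatr_eq0 // scale1r.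
  rewrite -e2 normrZ ger0_norm ?invr_ge0 ?ler0n //.
  rewrite mulrC ler_wpM2r ?invr_ge0 ?ler0n //.
  by rewrite (le_trans (ler_normD _ _)) // normrZ ger0_norm ?ler0n.
case: N N2 => [|m] // _.
have U := @upper_sum R _ _ x0 y0 hy m.
have L := @lower_sum R _ _ x0 y0 hx m.
have X1 : x 1%N ^+ 2 <= \sum_(1 <= n < m.+2) x n ^+ 2.
  rewrite big_ltn // lerDl; apply: sumr_ge0 => i _; exact: sqr_ge0.
have Sy0 : 0 <= \sum_(2 <= n < m.+2) y n ^+ 2 by apply: sumr_ge0 => i _; exact: sqr_ge0.
have xm := sqr_ge0 (x m.+1).
have x1 := sqr_ge0 (x 1%N).
rewrite /seminorm1 /seminorm2 -/x -/y.
set Sx := \sum_(1 <= n < m.+2) x n ^+ 2 in U L X1 *.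
set Sy := \sum_(2 <= n < m.+2) y n ^+ 2 in U L Sy0 *.
have A : tau * Sy + tau * x 1%N ^+ 2 <= 9%:R * (tau * Sx) by nra.
have B : tau * Sx <= 9%:R * (tau * Sy + tau * x 1%N ^+ 2) by nra.
have P1 : 0 <= tau * Sx by nra.
have P2 : 0 <= tau * Sy + tau * x 1%N ^+ 2 by nra.
have A' := ler_wsqrtr A; have B' := ler_wsqrtr B.
move: A' B'; rewrite !sqrt9 //.
have := sqrtr_ge0 (tau * Sx); have := sqrtr_ge0 (tau * Sy + tau * x 1%N ^+ 2).
move=> ? ? A' B'; split; last by [].
rewrite ler_pdivrMl ?ltr0n //; exact: A'.
Qed.
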